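(* Let $m,n\ge 3$ be (not necessarily distinct) integers. Then the strong product $C_m\boxtimes C_n$ is $\mathbb{Z}_{mn}$-distance antimagic if and only if both $m$ and $n$ are odd.
   Context: $C_n$ is the cycle of length $n$. The strong product $G_1\boxtimes G_2$ has vertex set $V(G_1)\times V(G_2)$, with distinct $(x_1,x_2),(y_1,y_2)$ adjacent iff for each $i$ either $x_i=y_i$ or $x_iy_i\in E(G_i)$. For a graph $G$ with $N$ vertices, a $\mathbb{Z}_N$-distance antimagic labelling is a bijection $f:V(G)\to\mathbb{Z}_N$ such that the weights $w_f(x)=\sum_{y\in N(x)} f(y)$ (mod $N$, $N(x)$ the open neighbourhood) are pairwise distinct; $G$ is $\mathbb{Z}_N$-distance antimagic if such a labelling exists. *)

(* Defs.v *)
From mathcomp Require Import all_boot.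
Set Implicit Arguments. Unset Strict Implicit. Unset Printing Implicit Defensive.

(* Cycle C_n on vertex set 'I_n: i ~ j iff j = i+1 mod n or i = j+1 mod n
   (and i <> j).  For n >= 3 this is the n-cycle. *)
Definition cycle_adj (n : nat) : rel 'I_n :=
  fun i j => (i != j) && ((j == (i + 1) %% n :> nat) || (i == (j + 1) %% n :> nat)).

Definition strong_adj (T1 T2 : finType) (e1 : rel T1) (e2 : rel T2) : rel (T1 * T2) :=
  fun x y => (x != y) && ((x.1 == y.1) || e1 x.1 y.1) && ((x.2 == y.2) || e2 x.2 y.2).

Definition dweight (T : finType) (e : rel T) (N : nat) (f : T -> 'I_N) (x : T) : nat :=
  (\sum_(y : T | e x y) (f y : nat)) %% N.

Definition ZN_distance_antimagic_labelling (T : finType) (e : rel T)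
    (f : T -> 'I_#|T|) : Prop :=
  bijective f /\ injective (dweight e f).

Definition ZN_distance_antimagic (T : finType) (e : rel T) : Prop :=
  exists f : T -> 'I_#|T|, ZN_distance_antimagic_labelling e f.

(* Main.v *)
Require Import Defs.
From mathcomp Require Import all_boot all_algebra zify ring.
Set Implicit Arguments. Unset Strict Implicit. Unset Printing Implicit Defensive.
Import GRing.Theory Num.Theory.

Lemma ordS_val m (i : 'I_m) : (ordS i : nat) = if i.+1 == m then 0 else i.+1.
Proof.
rewrite /=; case: eqP => h; first by rewrite h modnn.
rewrite modn_small //; have := ltn_ord i; lia.
Qed.

Lemma ord_pred_val m (i : 'I_m) : (ord_pred i : nat) = if i == 0 :> nat then m.-1 else i.-1.
Proof.
rewrite /=; have := ltn_ord i; case: eqP => h lt.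
  by rewrite h add0n modn_small //; lia.
have -> : (i + m).-1 = i.-1 + m by lia.
by rewrite modnDr modn_small //; lia.
Qed.

Definition nb m (i : 'I_m) := [:: ord_pred i; i; ordS i].

Lemma closedE m (i a : 'I_m) : ((i == a) || cycle_adj i a) = (a \in nb i).
Proof.
rewrite /cycle_adj /nb !inE.
have e1 : (a == (i + 1) %% m :> nat) = (a == ordS i) by rewrite -val_eqE /= addn1.
have e2 : (i == (a + 1) %% m :> nat) = (ord_pred i == a).
  by rewrite -(inj_eq (@ordS_inj m)) ord_predK -val_eqE /= addn1.
rewrite e1 e2 [a == i]eq_sym; case: (i =P a) => _ /=; first by rewrite orbT.
by rewrite [ord_pred i == a]eq_sym orbC.
Qed.

Lemma add_mod_ne m i k : i < m -> 0 < k < m -> (i + k) %% m != i.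
Proof.
move=> hi /andP[k0 km]; case: (ltnP (i + k) m) => h.
  by rewrite modn_small //; lia.
have -> : i + k = (i + k - m) + m by lia.
by rewrite modnDr modn_small; lia.
Qed.

Lemma nb_uniq m (i : 'I_m) : 3 <= m -> uniq (nb i).
Proof.
move=> hm; have lt := ltn_ord i.
have h1 : ordS i != i by rewrite -val_eqE /= -addn1 add_mod_ne //; lia.
have h2 : ord_pred i != i.
  by rewrite -(inj_eq (@ordS_inj m)) ord_predK eq_sym.
have h3 : ord_pred i != ordS i.
  rewrite -(inj_eq (@ordS_inj m)) ord_predK -val_eqE /= eq_sym.
  have -> : (i.+1 %% m).+1 %% m = (i + 2) %% m.
    by rewrite -addn1 modnDml; congr (_ %% _); lia.
  by rewrite add_mod_ne //; lia.
rewrite /nb /= !inE negb_or h2 h3 /= andbT. by rewrite eq_sym.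
Qed.

Lemma closed_sum m (i : 'I_m) (F : 'I_m -> nat) : 3 <= m ->
  \sum_(a | (i == a) || cycle_adj i a) F a = F (ord_pred i) + F i + F (ordS i).
Proof.
move=> hm; rewrite (eq_bigl (fun a => a \in nb i)); last by move=> a; rewrite closedE.
rewrite -big_uniq ?nb_uniq // /nb !big_cons big_nil /=; lia.
Qed.

Lemma A_val m (i : 'I_m) : 3 <= m ->
  ord_pred i + i + ordS i + m * (i == m.-1 :> nat) = 3 * i + m * (i == 0 :> nat).
Proof.
move=> hm; have lt := ltn_ord i; rewrite ordS_val ord_pred_val.
case: (i =P 0 :> nat) => h0; case: (i =P m.-1 :> nat) => h1;
  case: (i.+1 =P m) => h2 /=; lia.
Qed.
Notation adj m n := (strong_adj (@cycle_adj m) (@cycle_adj n)).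

Lemma cycle_adj_sym m (i j : 'I_m) : cycle_adj i j = cycle_adj j i.
Proof. by rewrite /cycle_adj eq_sym orbC. Qed.

Lemma adj_sym m n (x y : 'I_m * 'I_n) : adj m n x y = adj m n y x.
Proof.
by rewrite /strong_adj eq_sym [x.1 == _]eq_sym [x.2 == _]eq_sym
   cycle_adj_sym [cycle_adj x.2 _]cycle_adj_sym.
Qed.

Lemma nbsum m n (g : 'I_m * 'I_n -> nat) x : 3 <= m -> 3 <= n ->
  \sum_(y | adj m n x y) g y + g x =
  \sum_(a <- nb x.1) \sum_(b <- nb x.2) g (a, b).
Proof.
move=> hm hn.
rewrite big_uniq ?nb_uniq //.
rewrite (eq_bigr (fun a => \sum_(b | (x.2 == b) || cycle_adj x.2 b) g (a, b))); last first.
  move=> a _; rewrite big_uniq ?nb_uniq //; apply: eq_bigl => b; by rewrite closedE.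
rewrite (eq_bigl (fun a => (x.1 == a) || cycle_adj x.1 a)); last by move=> a; rewrite closedE.
rewrite pair_big_dep /=.
rewrite [RHS](bigD1 x) /=; last by rewrite !eqxx.
rewrite addnC; congr (_ + _); first by case: x.
apply: eq_big; last by case.
move=> y; rewrite /strong_adj eq_sym; case: (y == x) => /=; by rewrite ?andbT ?andbF.
Qed.

Lemma deg8 m n x : 3 <= m -> 3 <= n -> \sum_(y | adj m n x y) 1 = 8.
Proof.
move=> hm hn; have := nbsum (fun _ => 1) x hm hn.
rewrite /nb !big_cons !big_nil /=; lia.
Qed.

Local Open Scope ring_scope.
Lemma key (m n : nat) (i i' j j' : nat) (W W' X X' Y Y' : int) :
 odd m -> odd n -> (i < m)%N -> (i' < m)%N -> (j < n)%N -> (j' < n)%N ->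
 W = 8 * i%:Z + 8 * m%:Z * j%:Z + 3 * m%:Z * X + 3 * m%:Z * n%:Z * Y ->
 W' = 8 * i'%:Z + 8 * m%:Z * j'%:Z + 3 * m%:Z * X' + 3 * m%:Z * n%:Z * Y' ->
 (m%:Z * n%:Z %| W - W')%Z -> (i = i' -> X = X') -> i = i' /\ j = j'.
Proof.
move=> om on hi hi' hj hj' hW hW' /dvdzP[q hq] hX.
have c8 : forall k : nat, odd k -> coprimez k 8.
  move=> k ok; rewrite coprimezE /=.
  have -> : (1 + (1 + (1 + (1 + (1 + (1 + (1 + 1)))))))%N = (2 ^ 3)%N by [].
  by rewrite coprime_pexpr // coprimen2.
have d1 : (m%:Z %| 8 * (i%:Z - i'%:Z ))%Z.
  apply/dvdzP; exists (q * n%:Z - 8 * (j%:Z-j'%:Z ) - 3 * (X-X') - 3 * n%:Z * (Y-Y')).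
  rewrite hW hW' in hq; lia.
rewrite Gauss_dvdzr ?c8 // in d1.
have ii : i = i'.
  move/dvdzP: d1 => [r hr].
  have [r0|r0|r0] := ltrgtP r 0.
  - have : r * m%:Z <= -1 * m%:Z by rewrite ler_pM2r; [lia|lia].
    lia.
  - have : 1 * m%:Z <= r * m%:Z by rewrite ler_pM2r; [lia|lia].
    lia.
  - rewrite r0 mul0r in hr; lia.
split => //; subst i'; rewrite -hX // in hW'.
have d2 : (n%:Z %| 8 * (j%:Z - j'%:Z ))%Z.
  apply/dvdzP; exists (q - 3 * (Y-Y')).
  rewrite hW hW' in hq.
  have m0 : m%:Z != 0 by move: om; case: (m).
  apply: (mulfI m0); lia.
rewrite Gauss_dvdzr ?c8 // in d2.
move/dvdzP: d2 => [r hr].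
have [r0|r0|r0] := ltrgtP r 0.
- have : r * n%:Z <= -1 * n%:Z by rewrite ler_pM2r; [lia|lia].
  lia.
- have : 1 * n%:Z <= r * n%:Z by rewrite ler_pM2r; [lia|lia].
  lia.
- rewrite r0 mul0r in hr; lia.
Qed.
Lemma lin (m n W i j A B e z e' z' : nat) :
  (W + (i + m * j) = 3 * A + 3 * m * B)%N -> (A + m * e = 3 * i + m * z)%N ->
  (B + n * e' = 3 * j + n * z')%N ->
  W%:Z = 8 * i%:Z + 8 * m%:Z * j%:Z + 3 * m%:Z * (z%:Z - e%:Z) + 3 * m%:Z * n%:Z * (z'%:Z - e'%:Z).
Proof.
move=> /(congr1 Posz) h1 /(congr1 Posz) h2 /(congr1 Posz) h3.
rewrite !PoszD !PoszM in h1 h2 h3.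
have hW : W%:Z = 3 * A%:Z + 3 * m%:Z * B%:Z - (i%:Z + m%:Z * j%:Z) by rewrite -h1 addrK.
have hA : A%:Z = 3 * i%:Z + m%:Z * z%:Z - m%:Z * e%:Z by rewrite -h2 addrK.
have hB : B%:Z = 3 * j%:Z + n%:Z * z'%:Z - n%:Z * e'%:Z by rewrite -h3 addrK.
rewrite hW hA hB; ring.
Qed.
Local Close Scope ring_scope.

Lemma weight_eq m n (i : 'I_m) (j : 'I_n) : 3 <= m -> 3 <= n ->
  \sum_(y | adj m n (i, j) y) (y.1 + m * y.2) + (i + m * j) =
  3 * (ord_pred i + i + ordS i) + 3 * m * (ord_pred j + j + ordS j).
Proof.
move=> hm hn; rewrite (nbsum (fun y : 'I_m * 'I_n => y.1 + m * y.2) (i, j) hm hn) /=.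
rewrite /nb !big_cons !big_nil /=; lia.
Qed.

Theorem mainTheorem17 (m n : nat) (hm : 3 <= m) (hn : 3 <= n) :
  ZN_distance_antimagic (strong_adj (@cycle_adj m) (@cycle_adj n))
  <-> (odd m && odd n).
Proof.
have cardT : #|{: 'I_m * 'I_n}| = m * n by rewrite card_prod !card_ord.
split.
- move=> [f [fbij winj]].
  set N := #|{: 'I_m * 'I_n}| in f fbij winj cardT *.
  have N0 : 0 < N by rewrite cardT muln_gt0; apply/andP; split; lia.
  have Hf : \sum_(x : 'I_m * 'I_n) (f x : nat) = 'C(N, 2).
    rewrite -bin2_sum big_mkord [RHS](reindex f) //.
    exact: onW_bij.
  pose g (x : 'I_m * 'I_n) : 'I_N := Ordinal (ltn_pmod (\sum_(y | adj m n x y) (f y : nat)) N0).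
  have ginj : injective g.
    by move=> x y /(congr1 val) /= h; apply: winj.
  have gbij : bijective g by apply: inj_card_bij ginj _; rewrite card_ord.
  have Hw : \sum_(x : 'I_m * 'I_n) (g x : nat) = 'C(N, 2).
    rewrite -bin2_sum big_mkord [RHS](reindex g) //.
    exact: onW_bij.
  have Hdeg : \sum_(x : 'I_m * 'I_n) \sum_(y | adj m n x y) (f y : nat) =
              8 * \sum_(y : 'I_m * 'I_n) (f y : nat).
    rewrite (eq_bigr (fun x => \sum_y (if adj m n x y then (f y : nat) else 0))); last first.
      by move=> x _; rewrite big_mkcond.
    rewrite exchange_big big_distrr /=; apply: eq_bigr => y _.
    rewrite -big_mkcond /= (eq_bigl (fun x => adj m n y x)); last by move=> x; rewrite adj_sym.
    transitivity (\sum_(x | adj m n y x) (f y : nat) * 1).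
      by apply: eq_bigr => x _; rewrite muln1.
    by rewrite -big_distrr deg8 // mulnC.
  have Hmod : 'C(N, 2) = 8 * 'C(N, 2) %[mod N].
    by rewrite -{1}Hw -Hf -Hdeg /= modn_summ.
  case: (boolP (odd m && odd n)) => // hodd; exfalso.
  have oN : odd N = false by rewrite cardT oddM; apply/negbTE.
  have hN := odd_double_half N; rewrite oN add0n in hN.
  set K := N./2 in hN.
  have K0 : 0 < K by lia.
  have hC : 'C(N, 2) = K * N.-1.
    by rewrite bin2 -{1}hN -doubleMl half_double.
  move: Hmod; rewrite hC; move/eqP; rewrite eq_sym eqn_mod_dvd; last by lia.
  case/dvdnP => k hk.
  have hk' : 8 * (K * N.-1) - K * N.-1 = k * K.*2 by rewrite hN.
  have : K * (7 * N.-1) = K * (2 * k) by nia.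
  move/eqP; rewrite eqn_pmul2l // => /eqP; lia.
- case/andP => om on.
  have lt0 : forall x : 'I_m * 'I_n, x.1 + m * x.2 < #|{: 'I_m * 'I_n}|.
    move=> [i j] /=; rewrite cardT; have := ltn_ord i; have := ltn_ord j; nia.
  pose f0 (x : 'I_m * 'I_n) := Ordinal (lt0 x).
  exists f0; split.
  + apply: inj_card_bij; last by rewrite card_ord.
    move=> [i j] [i' j'] /(congr1 val) /= h.
    have := ltn_ord i; have := ltn_ord i'; move=> l1 l2.
    have hj : (j : nat) = j' by nia.
    have hi : (i : nat) = i' by nia.
    by rewrite (val_inj hi) (val_inj hj).
  + move=> [i j] [i' j']; rewrite /dweight /= => hd.
    set W := \sum_(y | _) _ in hd; set W' := \sum_(y | _) _ in hd.
    have E1 : W + (i + m * j) = 3 * (ord_pred i + i + ordS i) + 3 * m * (ord_pred j + j + ordS j)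
      by rewrite -weight_eq.
    have E1' : W' + (i' + m * j') = 3 * (ord_pred i' + i' + ordS i') + 3 * m * (ord_pred j' + j' + ordS j')
      by rewrite -weight_eq.
    have [hi hj] : (i : nat) = i' /\ (j : nat) = j'.
    apply: (@key m n i i' j j' W%:Z W'%:Z
      ((i == 0 :> nat)%:Z - (i == m.-1 :> nat)%:Z) ((i' == 0 :> nat)%:Z - (i' == m.-1 :> nat)%:Z)
      ((j == 0 :> nat)%:Z - (j == n.-1 :> nat)%:Z) ((j' == 0 :> nat)%:Z - (j' == n.-1 :> nat)%:Z)
      om on (ltn_ord i) (ltn_ord i') (ltn_ord j) (ltn_ord j')).
    * exact: lin E1 (A_val i hm) (A_val j hn).
    * exact: lin E1' (A_val i' hm) (A_val j' hn).
    * rewrite -PoszM -eqz_mod_dvd !modz_nat -cardT.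
      by apply/eqP; congr Posz.
    * by move=> h; rewrite h.
    by rewrite (val_inj hi) (val_inj hj).
Qed.
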